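(* For each fixed $\omega\in\Omega_0^*$, the sample path $(u,v)\mapsto\dot X(u,v,\omega)$ is a three times continuously differentiable function on $\mathbb{R}\times(1/\alpha;1)$. Consequently, for all real $M,a,b$ with $M>0$ and $1/\alpha<a<b<1$ (with the convention $0/0=0$), $$\sup_{(u_1,u_2,v_1,v_2)\in[-M;M]^2\times[a;b]^2}\left\{\frac{|\dot X(u_1,v_1,\omega)-\dot X(u_2,v_2,\omega)|}{|u_1-u_2|+|v_1-v_2|}\right\}<\infty,$$ and in particular $$\sup_{(u_1,u_2,v)\in[-M;M]^2\times[a;b]}\left\{\frac{|\dot X(u_1,v,\omega)-\dot X(u_2,v,\omega)|}{|u_1-u_2|}\right\}<\infty.$$
   Context: Fix $\alpha\in(1,2)$. Let $Z_\alpha(ds)$ be an independently scattered symmetric $\alpha$-stable random measure on $\mathbb{R}$ with Lebesgue control measure on $(\Omega,\mathcal{F},\mathbb{P})$. For $x,\kappa\in\mathbb{R}$, $(x)_+^\kappa=x^\kappa$ if $x>0$ and $0$ otherwise. Let $\psi$ be a three times continuously differentiable compactly supported Daubechies mother wavelet generating an orthonormal basis of $L^2(\mathbb{R})$. For $(x,v)\in\mathbb{R}\times(1/\alpha;1)$, $\Psi(x,v)=\int_{\mathbb{R}}(x-s)_+^{v-1/\alpha}\psi(s)\,ds$; for $(j,k)\in\mathbb{Z}^2$, $\epsilon_{j,k}=2^{j/\alpha}\int_{\mathbb{R}}\psi(2^js-k)Z_\alpha(ds)$. $\Omega_0^*$ is an event of probability $1$ such that for every $\eta>0$ there is a positive finite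 random variable $C_\eta$ with $|\epsilon_{j,k}(\omega)|\le C_\eta(\omega)(3+|j|)^{1/\alpha+\eta}(3+|k|)^{1/\alpha+\eta}$ for all $\omega\in\Omega_0^*$, $(j,k)\in\mathbb{Z}^2$ (such an event exists). The low frequency part $\dot X$ is defined on $\Omega_0^*$, for $(u,v)\in\mathbb{R}\times(1/\alpha;1)$, by $\dot X(u,v)=\sum_{j=1}^{\infty}\sum_{k\in\mathbb{Z}}2^{jv}\epsilon_{-j,k}\big(\Psi(2^{-j}u-k,v)-\Psi(-k,v)\big)$ (this series converges on $\Omega_0^*$ uniformly on compact subsets of $\mathbb{R}\times(1/\alpha;1)$). One may use that all partial derivatives $\partial_x^p\partial_v^q\Psi$, $p\in\{0,1,2,3\}$, $q\in\mathbb{Z}_+$, exist, are continuous and satisfy $\sup_{(x,v)\in\mathbb{R}\times[a;b]}(3+|x|)^2|\partial_x^p\partial_v^q\Psi(x,v)|<\infty$ for every compact $[a;b]\subset(1/\alpha;1)$. *)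

(* Defs.v *)
From Stdlib Require Export Reals Lra ZArith Classical ClassicalEpsilon.
Open Scope R_scope.

(** Total Riemann integral: value of [RiemannInt] if [f] is Riemann
    integrable on [a,b], and 0 otherwise (the value is independent of the
    integrability proof, cf. RiemannInt_P5). *)
Definition RInt (f : R -> R) (a b : R) : R :=
  match excluded_middle_informative (exists pr : Riemann_integrable f a b, True) with
  | left H => RiemannInt (proj1_sig (constructive_indefinite_description _ H))
  | right _ => 0
  end.

Definition lim_seq (u : nat -> R) : R :=
  match excluded_middle_informative (exists l, Un_cv u l) with
  | left H => proj1_sig (constructive_indefinite_description _ H)
  | right _ => 0
  end.

Definition RealLineInt (f : R -> R) : R :=
  lim_seq (fun n => RInt f (- INR n) (INR n)).

Definition pospow (x kappa : R) : R :=
  if Rlt_dec 0 x then Rpower x kappa else 0.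

Definition Psi (alpha : R) (psi : R -> R) (x v : R) : R :=
  RealLineInt (fun s => pospow (x - s) (v - 1 / alpha) * psi s).

(** Sum over k in Z, as the limit of symmetric partial sums over |k| <= N. *)
Definition sumZ (f : Z -> R) : R :=
  lim_seq (fun N => sum_f_R0 (fun i => f (Z.of_nat i - Z.of_nat N)%Z) (2 * N)).

Definition sumN1 (f : nat -> R) : R :=
  lim_seq (fun J => sum_f_R0 (fun i => f (S i)) J).

Definition Xdot (alpha : R) (psi : R -> R) (eps : Z -> Z -> R) (u v : R) : R :=
  sumN1 (fun j =>
    sumZ (fun k =>
      Rpower 2 (INR j * v) * eps (- Z.of_nat j)%Z k *
      (Psi alpha psi (/ 2 ^ j * u - IZR k) v - Psi alpha psi (- IZR k) v))).

Definition in_dom (alpha v : R) : Prop := 1 / alpha < v < 1.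

Definition cont_dom (alpha : R) (f : R -> R -> R) (u v : R) : Prop :=
  forall e, 0 < e -> exists d, 0 < d /\
    forall u' v', in_dom alpha v' -> Rabs (u' - u) < d -> Rabs (v' - v) < d ->
      Rabs (f u' v' - f u v) < e.

Definition C3_dom (alpha : R) (f : R -> R -> R) : Prop :=
  exists D : nat -> nat -> R -> R -> R,
    (forall u v, in_dom alpha v -> D 0%nat 0%nat u v = f u v) /\
    (forall p q u v, (p + q < 3)%nat -> in_dom alpha v ->
        derivable_pt_lim (fun x => D p q x v) u (D (S p) q u v)) /\
    (forall p q u v, (p + q < 3)%nat -> in_dom alpha v ->
        derivable_pt_lim (fun y => D p q u y) v (D p (S q) u v)) /\
    (forall p q u v, (p + q <= 3)%nat -> in_dom alpha v -> cont_dom alpha (D p q) u v).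

Definition qdiv (x y : R) : R := if Req_EM_T y 0 then 0 else x / y.

(* Main.v *)
Require Import Defs.
From Stdlib Require Import Reals ZArith Lra Lia.
From Coquelicot Require Import Coquelicot.
Open Scope R_scope.

Section CD.
Variable alpha : R.

Lemma cd_plus f g u v : cont_dom alpha f u v -> cont_dom alpha g u v ->
  cont_dom alpha (fun x y => f x y + g x y) u v.
Proof.
  intros Hf Hg e He.
  destruct (Hf (e/2)) as [d1 [Hd1 H1]]; [lra|].
  destruct (Hg (e/2)) as [d2 [Hd2 H2]]; [lra|].
  exists (Rmin d1 d2); split; [apply Rmin_pos; lra|].
  intros u' v' Hd Hu Hv.
  assert (A1 := H1 u' v' Hd (Rlt_le_trans _ _ _ Hu (Rmin_l _ _)) (Rlt_le_trans _ _ _ Hv (Rmin_l _ _))).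
  assert (A2 := H2 u' v' Hd (Rlt_le_trans _ _ _ Hu (Rmin_r _ _)) (Rlt_le_trans _ _ _ Hv (Rmin_r _ _))).
  replace (f u' v' + g u' v' - (f u v + g u v)) with ((f u' v' - f u v) + (g u' v' - g u v)) by ring.
  eapply Rle_lt_trans; [apply Rabs_triang|]. lra.
Qed.

Lemma cd_minus f g u v : cont_dom alpha f u v -> cont_dom alpha g u v ->
  cont_dom alpha (fun x y => f x y - g x y) u v.
Proof.
  intros Hf Hg e He.
  destruct (Hf (e/2)) as [d1 [Hd1 H1]]; [lra|].
  destruct (Hg (e/2)) as [d2 [Hd2 H2]]; [lra|].
  exists (Rmin d1 d2); split; [apply Rmin_pos; lra|].
  intros u' v' Hd Hu Hv.
  assert (A1 := H1 u' v' Hd (Rlt_le_trans _ _ _ Hu (Rmin_l _ _)) (Rlt_le_trans _ _ _ Hv (Rmin_l _ _))).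
  assert (A2 := H2 u' v' Hd (Rlt_le_trans _ _ _ Hu (Rmin_r _ _)) (Rlt_le_trans _ _ _ Hv (Rmin_r _ _))).
  replace (f u' v' - g u' v' - (f u v - g u v)) with ((f u' v' - f u v) + - (g u' v' - g u v)) by ring.
  eapply Rle_lt_trans; [apply Rabs_triang|]. rewrite Rabs_Ropp. lra.
Qed.

Lemma cd_mult f g u v : cont_dom alpha f u v -> cont_dom alpha g u v ->
  cont_dom alpha (fun x y => f x y * g x y) u v.
Proof.
  intros Hf Hg e He.
  set (A := Rabs (f u v) + 1). set (B := Rabs (g u v) + 1).
  assert (HA : 0 < A) by (unfold A; pose proof (Rabs_pos (f u v)); lra).
  assert (HB : 0 < B) by (unfold B; pose proof (Rabs_pos (g u v)); lra).
  set (e1 := e / (2 * B)). set (e2 := Rmin 1 (e / (2 * A))).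
  assert (He1 : 0 < e1) by (apply Rdiv_lt_0_compat; lra).
  assert (He2 : 0 < e2) by (apply Rmin_pos; [lra| apply Rdiv_lt_0_compat; lra]).
  destruct (Hf e1 He1) as [d1 [Hd1 H1]].
  destruct (Hg e2 He2) as [d2 [Hd2 H2]].
  exists (Rmin d1 d2); split; [apply Rmin_pos; lra|].
  intros u' v' Hd Hu Hv.
  assert (A1 := H1 u' v' Hd (Rlt_le_trans _ _ _ Hu (Rmin_l _ _)) (Rlt_le_trans _ _ _ Hv (Rmin_l _ _))).
  assert (A2 := H2 u' v' Hd (Rlt_le_trans _ _ _ Hu (Rmin_r _ _)) (Rlt_le_trans _ _ _ Hv (Rmin_r _ _))).
  replace (f u' v' * g u' v' - f u v * g u v) with
    ((f u' v' - f u v) * g u' v' + f u v * (g u' v' - g u v)) by ring.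
  eapply Rle_lt_trans; [apply Rabs_triang|]. rewrite !Rabs_mult.
  assert (E2a : e2 <= 1) by apply Rmin_l.
  assert (E2b : e2 <= e / (2*A)) by apply Rmin_r.
  assert (Hg' : Rabs (g u' v') <= B).
  { unfold B. replace (g u' v') with (g u v + (g u' v' - g u v)) by ring.
    eapply Rle_trans; [apply Rabs_triang|]. lra. }
  assert (Hf' : Rabs (f u v) <= A) by (unfold A; lra).
  assert (X1 : Rabs (f u' v' - f u v) * Rabs (g u' v') <= e1 * B).
  { apply Rmult_le_compat; try apply Rabs_pos; lra. }
  assert (X2 : Rabs (f u v) * Rabs (g u' v' - g u v) < A * (e / (2*A))).
  { apply Rle_lt_trans with (A * Rabs (g u' v' - g u v)).
    apply Rmult_le_compat_r; [apply Rabs_pos|lra].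
    apply Rmult_lt_compat_l; lra. }
  assert (e1 * B = e/2) by (unfold e1; field; lra).
  assert (A * (e / (2*A)) = e/2) by (field; lra).
  lra.
Qed.

Lemma cd_const c u v : cont_dom alpha (fun _ _ => c) u v.
Proof. intros e He; exists 1; split; [lra|]; intros; rewrite Rminus_eq_0, Rabs_R0; lra. Qed.

Lemma cd_v (h : R -> R) u v : continuity_pt h v -> cont_dom alpha (fun _ y => h y) u v.
Proof.
  intros Hc e He. destruct (Hc e He) as [d [Hd H]].
  exists d; split; [lra|]. intros u' v' _ _ Hv.
  destruct (Req_dec v' v) as [->|Hne].
  - rewrite Rminus_eq_0, Rabs_R0; lra.
  - apply (H v'). split; [split; [exact I| auto]| exact Hv].
Qed.

Lemma cd_affine (F : R -> R -> R) (a b u v : R) :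
  cont_dom alpha F (a * u + b) v -> cont_dom alpha (fun x y => F (a * x + b) y) u v.
Proof.
  intros Hc e He. destruct (Hc e He) as [d [Hd H]].
  exists (Rmin d (d / (Rabs a + 1))). split.
  { apply Rmin_pos; [lra| apply Rdiv_lt_0_compat; [lra| pose proof (Rabs_pos a); lra]]. }
  intros u' v' Hdom Hu Hv. apply H; auto.
  - replace (a * u' + b - (a * u + b)) with (a * (u' - u)) by ring.
    rewrite Rabs_mult.
    assert (Hu2 : Rabs (u' - u) < d / (Rabs a + 1)) by (eapply Rlt_le_trans; [exact Hu| apply Rmin_r]).
    pose proof (Rabs_pos a). pose proof (Rabs_pos (u'-u)).
    apply Rle_lt_trans with ((Rabs a + 1) * Rabs (u' - u)). nra.
    replace d with ((Rabs a + 1) * (d / (Rabs a + 1))) by (field; lra).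
    apply Rmult_lt_compat_l; lra.
  - eapply Rlt_le_trans; [exact Hv| apply Rmin_l].
Qed.

Lemma cd_fixu (F : R -> R -> R) (x0 u v : R) :
  cont_dom alpha F x0 v -> cont_dom alpha (fun _ y => F x0 y) u v.
Proof.
  intros Hc e He. destruct (Hc e He) as [d [Hd H]].
  exists d; split; [lra|]. intros u' v' Hdom _ Hv. apply H; auto.
  rewrite Rminus_eq_0, Rabs_R0; lra.
Qed.

Lemma cd_ext f g u v : (forall x y, in_dom alpha y -> f x y = g x y) -> in_dom alpha v ->
  cont_dom alpha f u v -> cont_dom alpha g u v.
Proof.
  intros E Hv Hc e He. destruct (Hc e He) as [d [Hd H]]. exists d; split; auto.
  intros u' v' Hd' Hu Hv'. rewrite <- !E; auto.
Qed.

Lemma cd_sum (f : nat -> R -> R -> R) u v N :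
  (forall n, cont_dom alpha (f n) u v) ->
  cont_dom alpha (fun x y => sum_f_R0 (fun n => f n x y) N) u v.
Proof.
  intros H. induction N; simpl. apply H. apply cd_plus; auto.
Qed.
End CD.

Lemma exs_dom (f w : nat -> R) : (forall n, Rabs (f n) <= w n) -> ex_series w ->
  ex_series f /\ ex_series (fun n => Rabs (f n)).
Proof.
  intros H Hw.
  assert (E : ex_series (fun n => Rabs (f n))).
  { apply (ex_series_le (fun n => Rabs (f n)) w); auto.
    intros n. change norm with Rabs. rewrite Rabs_Rabsolu. auto. }
  split; auto. apply ex_series_Rabs; auto.
Qed.

Lemma ser_bound (f w : nat -> R) : (forall n, Rabs (f n) <= w n) -> ex_series w ->
  Rabs (Series f) <= Series w.
Proof.
  intros H Hw. destruct (exs_dom f w H Hw) as [_ E].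
  eapply Rle_trans; [apply Series_Rabs; auto|].
  apply Series_le; auto. intros n; split; [apply Rabs_pos| auto].
Qed.

Lemma ser_cv (f : nat -> R) : ex_series f -> Un_cv (fun N => sum_f_R0 f N) (Series f).
Proof.
  intros H. apply Series_correct in H. apply is_series_Reals in H. exact H.
Qed.

Lemma ser_tail (f w : nat -> R) N : (forall n, Rabs (f n) <= w n) -> ex_series w ->
  Rabs (Series f - sum_f_R0 f N) <= Series w - sum_f_R0 w N.
Proof.
  intros H Hw. destruct (exs_dom f w H Hw) as [Ef _].
  rewrite (Series_incr_n f (S N)) by (lia || auto).
  rewrite (Series_incr_n w (S N)) by (lia || auto). simpl pred.
  replace (sum_f_R0 f N + Series (fun k => f (S N + k)%nat) - sum_f_R0 f N)
    with (Series (fun k => f (S N + k)%nat)) by ring.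
  replace (sum_f_R0 w N + Series (fun k => w (S N + k)%nat) - sum_f_R0 w N)
    with (Series (fun k => w (S N + k)%nat)) by ring.
  apply ser_bound; auto. apply ex_series_incr_n; auto.
Qed.

Lemma ser_tail_cv (w : nat -> R) : ex_series w ->
  forall e, 0 < e -> exists N0, forall N, (N0 <= N)%nat -> Series w - sum_f_R0 w N < e.
Proof.
  intros Hw e He. destruct (ser_cv w Hw e He) as [N0 HN]. exists N0. intros N HN'.
  specialize (HN N HN'). unfold R_dist in HN. rewrite Rabs_minus_sym in HN.
  pose proof (Rle_abs (Series w - sum_f_R0 w N)). lra.
Qed.

Lemma ser_nonneg (w : nat -> R) : (forall n, 0 <= w n) -> ex_series w -> 0 <= Series w.
Proof.
  intros H Hw. eapply Rle_trans; [|apply (ser_bound (fun _ => 0) w)]; auto.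
  apply Rabs_pos. intros; rewrite Rabs_R0; auto.
Qed.

Definition good alpha (F : nat -> nat -> R -> R -> R) : Prop :=
  (forall p q u v, (p + q < 3)%nat -> in_dom alpha v ->
        derivable_pt_lim (fun x => F p q x v) u (F (S p) q u v)) /\
  (forall p q u v, (p + q < 3)%nat -> in_dom alpha v ->
        derivable_pt_lim (fun y => F p q u y) v (F p (S q) u v)) /\
  (forall p q u v, (p + q <= 3)%nat -> in_dom alpha v -> cont_dom alpha (F p q) u v).

Definition domb (F : nat -> nat -> R -> R -> R) M a b w : Prop :=
  forall p q u v, (p + q <= 3)%nat -> Rabs u <= M -> a <= v <= b -> Rabs (F p q u v) <= w.

Definition boxok alpha M a b := 0 < M /\ 1/alpha < a /\ a <= b /\ b < 1.

Lemma nbhd alpha u0 v0 : in_dom alpha v0 -> exists M a b d, boxok alpha M a b /\ 0 < d /\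
  forall u v, Rabs (u - u0) < d -> Rabs (v - v0) < d -> Rabs u <= M /\ a <= v <= b /\ in_dom alpha v.
Proof.
  unfold in_dom; intros [H1 H2].
  exists (Rabs u0 + 1), ((1/alpha + v0)/2), ((v0+1)/2), (Rmin 1 (Rmin ((v0 - 1/alpha)/2) ((1-v0)/2))).
  split; [unfold boxok; pose proof (Rabs_pos u0); repeat split; lra|].
  split; [repeat apply Rmin_pos; lra|].
  intros u v Hu Hv.
  pose proof (Rmin_l 1 (Rmin ((v0 - 1/alpha)/2) ((1-v0)/2))).
  pose proof (Rmin_r 1 (Rmin ((v0 - 1/alpha)/2) ((1-v0)/2))).
  pose proof (Rmin_l ((v0 - 1/alpha)/2) ((1-v0)/2)).
  pose proof (Rmin_r ((v0 - 1/alpha)/2) ((1-v0)/2)).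
  apply Rabs_def2 in Hu. apply Rabs_def2 in Hv.
  split; [|split; lra].
  replace u with (u0 + (u - u0)) by ring. eapply Rle_trans; [apply Rabs_triang|].
  assert (Rabs (u - u0) <= 1) by (apply Rabs_le; lra). lra.
Qed.

Lemma dsum (f : nat -> R -> R) (f' : nat -> R -> R) x N :
  (forall n, derivable_pt_lim (f n) x (f' n x)) ->
  derivable_pt_lim (fun y => sum_f_R0 (fun n => f n y) N) x (sum_f_R0 (fun n => f' n x) N).
Proof.
  intros H. induction N; simpl. apply H.
  exact (derivable_pt_lim_plus _ _ _ _ _ IHN (H (S N))).
Qed.

Section Level.
Variable alpha : R.
Variable f : nat -> nat -> nat -> R -> R -> R.
Hypothesis Hg : forall n, good alpha (f n).
Hypothesis Hb : forall M a b, boxok alpha M a b -> exists w, (forall n, 0 <= w n) /\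
   ex_series w /\ forall n, domb (f n) M a b (w n).

Definition Sf p q u v := Series (fun n => f n p q u v).

Lemma level_bound M a b w : (forall n, 0 <= w n) -> ex_series w ->
  (forall n, domb (f n) M a b (w n)) -> domb Sf M a b (Series w).
Proof.
  intros Hw0 Hw Hd p q u v Hpq Hu Hv. unfold Sf. apply ser_bound; auto.
  intros n; apply Hd; auto.
Qed.

Lemma level_unif u0 v0 : in_dom alpha v0 -> exists d, 0 < d /\
  forall e, 0 < e -> exists N0, forall N p q u v, (N0 <= N)%nat -> (p + q <= 3)%nat ->
    Rabs (u - u0) < d -> Rabs (v - v0) < d ->
    Rabs (Sf p q u v - sum_f_R0 (fun n => f n p q u v) N) < e.
Proof.
  intros Hv0. destruct (nbhd alpha u0 v0 Hv0) as [M [a [b [d [Hbox [Hd Hn]]]]]].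
  destruct (Hb M a b Hbox) as [w [Hw0 [Hw Hdw]]].
  exists d; split; auto. intros e He.
  destruct (ser_tail_cv w Hw e He) as [N0 HN0]. exists N0.
  intros N p q u v HN Hpq Hu Hv. destruct (Hn u v Hu Hv) as [Hu' [Hv' _]].
  eapply Rle_lt_trans; [apply (ser_tail _ w)|apply HN0; auto]; auto.
  intros n; apply Hdw; auto.
Qed.

Lemma level_exs p q u v : (p + q <= 3)%nat -> in_dom alpha v -> ex_series (fun n => f n p q u v).
Proof.
  intros Hpq Hv. destruct (nbhd alpha u v Hv) as [M [a [b [d [Hbox [Hd Hn]]]]]].
  destruct (Hb M a b Hbox) as [w [Hw0 [Hw Hdw]]].
  destruct (Hn u v) as [Hu' [Hv' _]]; try (rewrite Rminus_eq_0, Rabs_R0; lra).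
  apply (exs_dom _ w); auto. intros n; apply Hdw; auto.
Qed.

Lemma level_good : good alpha Sf.
Proof.
  split; [|split].
  - intros p q u0 v0 Hpq Hv0.
    destruct (level_unif u0 v0 Hv0) as [d [Hd HU]].
    set (dd := mkposreal d Hd).
    apply (CVU_derivable (fun N x => sum_f_R0 (fun n => f n p q x v0) N)
             (fun N x => sum_f_R0 (fun n => f n (S p) q x v0) N)
             (fun x => Sf p q x v0) (fun x => Sf (S p) q x v0) u0 dd).
    + intros e He. destruct (HU e He) as [N0 HN0]. exists N0. intros N y HN Hy.
      apply HN0; [exact HN | lia | exact Hy | rewrite Rminus_eq_0, Rabs_R0; auto].
    + intros x Hx. apply ser_cv. apply level_exs; auto. lia.
    + intros N x Hx. apply (dsum (fun n y => f n p q y v0) (fun n y => f n (S p) q y v0)).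
      intros n. destruct (Hg n) as [G1 _]. apply G1; auto.
    + unfold Boule; simpl. rewrite Rminus_eq_0, Rabs_R0; auto.
  - intros p q u0 v0 Hpq Hv0.
    destruct (level_unif u0 v0 Hv0) as [d [Hd HU]].
    set (dd := mkposreal d Hd).
    destruct (nbhd alpha u0 v0 Hv0) as [M [a [b [d' [Hbox [Hd' Hn]]]]]].
    set (dd' := mkposreal (Rmin d d') (Rmin_pos _ _ Hd Hd')).
    apply (CVU_derivable (fun N y => sum_f_R0 (fun n => f n p q u0 y) N)
             (fun N y => sum_f_R0 (fun n => f n p (S q) u0 y) N)
             (fun y => Sf p q u0 y) (fun y => Sf p (S q) u0 y) v0 dd').
    + intros e He. destruct (HU e He) as [N0 HN0]. exists N0. intros N y HN Hy.
      apply HN0; [exact HN | lia | rewrite Rminus_eq_0, Rabs_R0; auto |].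
      unfold Boule in Hy; simpl in Hy. eapply Rlt_le_trans; [exact Hy| apply Rmin_l].
    + intros y Hy. apply ser_cv. apply level_exs. lia.
      unfold Boule in Hy; simpl in Hy. apply (Hn u0 y). rewrite Rminus_eq_0, Rabs_R0; auto.
      eapply Rlt_le_trans; [exact Hy| apply Rmin_r].
    + intros N y Hy. apply (dsum (fun n z => f n p q u0 z) (fun n z => f n p (S q) u0 z)).
      intros n. destruct (Hg n) as [_ [G2 _]]. apply G2; auto.
      unfold Boule in Hy; simpl in Hy. apply (Hn u0 y). rewrite Rminus_eq_0, Rabs_R0; auto.
      eapply Rlt_le_trans; [exact Hy| apply Rmin_r].
    + unfold Boule; simpl. rewrite Rminus_eq_0, Rabs_R0; apply Rmin_pos; auto.
  - intros p q u0 v0 Hpq Hv0 e He.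
    destruct (level_unif u0 v0 Hv0) as [d [Hd HU]].
    destruct (HU (e/3)) as [N0 HN0]; [lra|].
    assert (Hc : cont_dom alpha (fun x y => sum_f_R0 (fun n => f n p q x y) N0) u0 v0).
    { apply cd_sum. intros n. destruct (Hg n) as [_ [_ G3]]. apply G3; auto. }
    destruct (Hc (e/3)) as [d1 [Hd1 H1]]; [lra|].
    exists (Rmin d d1); split; [apply Rmin_pos; auto|].
    intros u v Hv Hu Hvv.
    assert (Hu1 : Rabs (u - u0) < d) by (eapply Rlt_le_trans; [exact Hu| apply Rmin_l]).
    assert (Hv1 : Rabs (v - v0) < d) by (eapply Rlt_le_trans; [exact Hvv| apply Rmin_l]).
    assert (Hu2 : Rabs (u - u0) < d1) by (eapply Rlt_le_trans; [exact Hu| apply Rmin_r]).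
    assert (Hv2 : Rabs (v - v0) < d1) by (eapply Rlt_le_trans; [exact Hvv| apply Rmin_r]).
    assert (A1 := HN0 N0 p q u v (le_n _) Hpq Hu1 Hv1).
    assert (A2 := HN0 N0 p q u0 v0 (le_n _) Hpq ltac:(rewrite Rminus_eq_0, Rabs_R0; auto)
                                             ltac:(rewrite Rminus_eq_0, Rabs_R0; auto)).
    assert (A3 := H1 u v Hv Hu2 Hv2). simpl in A3.
    set (P := sum_f_R0 (fun n => f n p q u v) N0) in *.
    set (P0 := sum_f_R0 (fun n => f n p q u0 v0) N0) in *.
    replace (Sf p q u v - Sf p q u0 v0) with ((Sf p q u v - P) + (P - P0) - (Sf p q u0 v0 - P0)) by ring.
    set (x1 := Sf p q u v - P) in *. set (x2 := P - P0) in *. set (x3 := Sf p q u0 v0 - P0) in *.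
    pose proof (Rabs_triang (x1 + x2) (- x3)). pose proof (Rabs_triang x1 x2).
    rewrite Rabs_Ropp in *. unfold Rminus at 1. lra.
Qed.
End Level.

Section Double.
Variable alpha : R.
Variable t : nat -> nat -> nat -> nat -> R -> R -> R.
Hypothesis Hg : forall j n, good alpha (t j n).
Hypothesis Hb : forall M a b, boxok alpha M a b -> exists c d : nat -> R,
  (forall j, 0 <= c j) /\ (forall n, 0 <= d n) /\ ex_series c /\ ex_series d /\
  forall j n, domb (t j n) M a b (c j * d n).

Definition S2 p q u v := Series (fun j => Series (fun n => t j n p q u v)).

Lemma inner_good j : good alpha (Sf (t j)).
Proof.
  apply level_good; auto.
  intros M a b Hbox. destruct (Hb M a b Hbox) as [c [d [Hc [Hd [Ec [Ed H]]]]]].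
  exists (fun n => c j * d n). split; [intros; apply Rmult_le_pos; auto|]. split; auto.
  apply (ex_series_scal_l (c j) d); auto.
Qed.

Lemma double_good : good alpha S2 /\ forall M a b, boxok alpha M a b ->
  exists B, 0 <= B /\ domb S2 M a b B.
Proof.
  assert (Hb2 : forall M a b, boxok alpha M a b -> exists w, (forall n, 0 <= w n) /\
   ex_series w /\ forall n, domb (Sf (t n)) M a b (w n)).
  { intros M a b Hbox. destruct (Hb M a b Hbox) as [c [d [Hc [Hd [Ec [Ed H]]]]]].
    exists (fun j => c j * Series d). split; [intros; apply Rmult_le_pos; auto; apply ser_nonneg; auto|].
    split. apply (ex_series_scal_r (Series d) c); auto.
    intros j. rewrite <- Series_scal_l.
    apply level_bound; auto.
    - intros; apply Rmult_le_pos; auto.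
    - apply (ex_series_scal_l (c j) d); auto. }
  split.
  - apply (level_good alpha (fun j => Sf (t j))); auto. apply inner_good.
  - intros M a b Hbox. destruct (Hb2 M a b Hbox) as [w [Hw0 [Hw Hd]]].
    exists (Series w). split. apply ser_nonneg; auto.
    apply (level_bound (fun j => Sf (t j))); auto.
Qed.
End Double.

Lemma inv_cv0 : is_lim_seq (fun n => / (4 + INR n)) 0.
Proof.
  apply is_lim_seq_Reals. intros e He.
  destruct (archimed (/ e)) as [H1 _].
  assert (Hz : (0 <= up (/ e))%Z).
  { apply le_IZR. pose proof (Rinv_0_lt_compat e He). lra. }
  exists (Z.to_nat (up (/ e))). intros n Hn. unfold R_dist.
  rewrite Rminus_0_r. pose proof (pos_INR n).
  rewrite Rabs_pos_eq by (left; apply Rinv_0_lt_compat; lra).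
  apply le_INR in Hn. rewrite INR_IZR_INZ, Z2Nat.id in Hn by auto.
  apply Rlt_le_trans with (/ (/ e)). apply Rinv_lt_contravar.
  apply Rmult_lt_0_compat; [apply Rinv_0_lt_compat|]; lra. lra.
  rewrite Rinv_inv. lra.
Qed.

Lemma poly_geom (rho : R) : 0 < rho < 1 -> ex_series (fun n => (4 + INR n) ^ 4 * rho ^ n).
Proof.
  intros Hr. apply ex_series_Rabs. apply (ex_series_DAlembert _ rho). lra.
  - intros n. pose proof (pos_INR n). apply Rmult_integral_contrapositive; split;
    apply pow_nonzero; intro; lra.
  - apply is_lim_seq_ext with (fun n => ((1 + / (4 + INR n)) ^ 4) * rho).
    + intros n. pose proof (pos_INR n). rewrite S_INR.
      rewrite Rabs_pos_eq.
      * assert (4 + INR n <> 0) by lra. assert (4 + (INR n + 1) <> 0) by lra.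
        assert (rho ^ n <> 0) by (apply pow_nonzero; lra).
        simpl. field. auto.
      * apply Rmult_le_pos. apply Rmult_le_pos; apply pow_le; lra.
        left; apply Rinv_0_lt_compat. apply Rmult_lt_0_compat; apply pow_lt; lra.
    + replace (Finite rho) with (Finite ((1 + 0) ^ 4 * rho)) by (f_equal; ring).
      apply is_lim_seq_mult'; [|apply is_lim_seq_const].
      assert (L : is_lim_seq (fun n => 1 + / (4 + INR n)) (1 + 0)).
      { apply is_lim_seq_plus'; [apply is_lim_seq_const| apply inv_cv0]. }
      simpl. apply is_lim_seq_mult'; auto. apply is_lim_seq_mult'; auto.
      apply is_lim_seq_mult'; auto. rewrite Rmult_1_r.
      apply is_lim_seq_ext with (fun n => 1 + / (4 + INR n)); auto. intros; ring.
Qed.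

Lemma ex_series_bounded (d : nat -> R) B : (forall n, 0 <= d n) ->
  (forall N, sum_f_R0 d N <= B) -> ex_series d.
Proof.
  intros H0 HB.
  destruct (growing_cv (fun N => sum_f_R0 d N)) as [l Hl].
  - intros n. simpl. specialize (H0 (S n)). lra.
  - exists B. intros x [N ->]. auto.
  - exists l. apply is_series_Reals. exact Hl.
Qed.

Lemma rpow_dec (x y s : R) : 0 <= s -> 0 < x <= y -> Rpower y (- s) <= Rpower x (- s).
Proof.
  intros Hs Hxy. rewrite !Rpower_Ropp. apply Rinv_le_contravar.
  unfold Rpower; apply exp_pos. apply Rle_Rpower_l; auto.
Qed.

Lemma pseries (s : R) : 1 < s -> ex_series (fun n => Rpower (3 + INR n) (- s)).
Proof.
  intros Hs.
  set (g := fun x => Rpower x (1 - s)).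
  assert (Step : forall n, Rpower (3 + INR n) (- s) <= (g (2 + INR n) - g (3 + INR n)) / (s - 1)).
  { intros n. pose proof (pos_INR n).
    destruct (MVT_cor2 g (fun x => (1 - s) * Rpower x (1 - s - 1)) (2 + INR n) (3 + INR n))
      as [c [Hc1 Hc2]]. lra.
    { intros c Hc. apply derivable_pt_lim_power. lra. }
    replace (1 - s - 1) with (- s) in Hc1 by ring.
    assert (Rpower (3 + INR n) (- s) <= Rpower c (- s)) by (apply rpow_dec; lra).
    apply (Rmult_le_reg_r (s - 1)); [lra|]. unfold Rdiv. rewrite Rmult_assoc, Rinv_l by lra.
    nra. }
  apply (ex_series_bounded _ (g 2 / (s - 1))).
  - intros n. left; unfold Rpower; apply exp_pos.
  - intros N. apply Rle_trans with ((g 2 - g (3 + INR N)) / (s - 1)).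
    + induction N.
      * specialize (Step 0%nat). simpl sum_f_R0. replace (INR 0) with 0 in * by reflexivity.
        replace (2 + 0) with 2 in Step by ring. unfold Rdiv in *. lra.
      * rewrite tech5. specialize (Step (S N)).
        rewrite S_INR in *. replace (2 + (INR N + 1)) with (3 + INR N) in Step by ring.
        unfold Rdiv in *. rewrite !Rmult_minus_distr_r in *. lra.
    + unfold Rdiv. apply Rmult_le_compat_r. left; apply Rinv_0_lt_compat; lra.
      assert (0 < g (3 + INR N)) by (unfold g, Rpower; apply exp_pos). lra.
Qed.

Lemma deq f x l l' : derivable_pt_lim f x l -> l = l' -> derivable_pt_lim f x l'.
Proof. intros H ->; auto. Qed.
Lemma dplus f g x a b : derivable_pt_lim f x a -> derivable_pt_lim g x b ->
  derivable_pt_lim (fun y => f y + g y) x (a + b).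
Proof. intros; exact (derivable_pt_lim_plus f g x a b H H0). Qed.
Lemma dminus f g x a b : derivable_pt_lim f x a -> derivable_pt_lim g x b ->
  derivable_pt_lim (fun y => f y - g y) x (a - b).
Proof. intros; exact (derivable_pt_lim_minus f g x a b H H0). Qed.
Lemma dmult f g x a b : derivable_pt_lim f x a -> derivable_pt_lim g x b ->
  derivable_pt_lim (fun y => f y * g y) x (a * g x + f x * b).
Proof. intros; exact (derivable_pt_lim_mult f g x a b H H0). Qed.
Lemma dscal c f x a : derivable_pt_lim f x a -> derivable_pt_lim (fun y => c * f y) x (c * a).
Proof. intros; exact (derivable_pt_lim_scal f c x a H). Qed.
Lemma dconst c x : derivable_pt_lim (fun _ => c) x 0.
Proof. exact (derivable_pt_lim_const c x). Qed.
Lemma daff (F : R -> R) a c u l : derivable_pt_lim F (a * u - c) l ->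
  derivable_pt_lim (fun x => F (a * x - c)) u (l * a).
Proof.
  intros H.
  assert (H1 : derivable_pt_lim (fun x => a * x - c) u a).
  { apply is_derive_Reals. auto_derive; auto; ring. }
  exact (derivable_pt_lim_comp (fun x => a * x - c) F u a l H1 H).
Qed.
Lemma dpow2 j v : derivable_pt_lim (fun y => Rpower 2 (INR j * y)) v (INR j * ln 2 * Rpower 2 (INR j * v)).
Proof. apply is_derive_Reals. unfold Rpower. auto_derive; auto; ring. Qed.


Section Terms.
Variable alpha : R.
Variable DP : nat -> nat -> R -> R -> R.
Variable eps : Z -> Z -> R.
Hypothesis HD2 : forall p q x v, (p < 3)%nat -> in_dom alpha v ->
          derivable_pt_lim (fun y => DP p q y v) x (DP (S p) q x v).
Hypothesis HD3 : forall p q x v, (p <= 3)%nat -> in_dom alpha v ->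
          derivable_pt_lim (fun w => DP p q x w) v (DP p (S q) x v).
Hypothesis HD4 : forall p q x v, (p <= 3)%nat -> in_dom alpha v -> cont_dom alpha (DP p q) x v.

Definition Hh (j : nat) (k : Z) (p r : nat) (u v : R) : R :=
  match p with
  | O => DP 0%nat r (/ 2 ^ j * u - IZR k) v - DP 0%nat r (- IZR k) v
  | _ => (/ 2 ^ j) ^ p * DP p r (/ 2 ^ j * u - IZR k) v
  end.

Definition Lj (j : nat) := INR j * ln 2.

Definition Ww j k p q u v : R :=
  match q with
  | O => Hh j k p 0 u v
  | 1%nat => Lj j * Hh j k p 0 u v + Hh j k p 1 u v
  | 2%nat => Lj j ^ 2 * Hh j k p 0 u v + 2 * Lj j * Hh j k p 1 u v + Hh j k p 2 u v
  | 3%nat => Lj j ^ 3 * Hh j k p 0 u v + 3 * Lj j ^ 2 * Hh j k p 1 u v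
             + 3 * Lj j * Hh j k p 2 u v + Hh j k p 3 u v
  | _ => 0
  end.

Definition TT j k p q u v := eps (- Z.of_nat j)%Z k * Rpower 2 (INR j * v) * Ww j k p q u v.

Lemma Hh_du j k p r u v : (p < 3)%nat -> in_dom alpha v ->
  derivable_pt_lim (fun x => Hh j k p r x v) u (Hh j k (S p) r u v).
Proof.
  intros Hp Hv. destruct p as [|p]; simpl.
  - eapply deq. apply dminus. apply (daff (fun y => DP 0%nat r y v)). apply HD2; auto. apply dconst.
    ring.
  - eapply deq. apply dscal. apply (daff (fun y => DP (S p) r y v)). apply HD2; auto. ring.
Qed.

Lemma Hh_dv j k p r u v : (p <= 3)%nat -> in_dom alpha v ->
  derivable_pt_lim (fun y => Hh j k p r u y) v (Hh j k p (S r) u v).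
Proof.
  intros Hp Hv. destruct p as [|p]; simpl.
  - apply dminus; apply HD3; auto.
  - apply dscal. apply HD3; auto.
Qed.

Lemma Hh_cd j k p r u v : (p <= 3)%nat -> in_dom alpha v -> cont_dom alpha (Hh j k p r) u v.
Proof.
  intros Hp Hv. destruct p as [|p]; simpl.
  - apply cd_minus.
    + apply (cd_affine alpha (DP 0%nat r) (/ 2 ^ j) (- IZR k)). apply HD4; auto.
    + apply (cd_fixu alpha (DP 0%nat r) (- IZR k)). apply HD4; auto.
  - apply (cd_mult alpha (fun _ _ => (/ 2 ^ j) ^ S p)). apply cd_const.
    apply (cd_affine alpha (DP (S p) r) (/ 2 ^ j) (- IZR k)). apply HD4; auto.
Qed.

Lemma Ww_du j k p q u v : (p < 3)%nat -> in_dom alpha v ->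
  derivable_pt_lim (fun x => Ww j k p q x v) u (Ww j k (S p) q u v).
Proof.
  intros Hp Hv. destruct q as [|[|[|[|q]]]]; unfold Ww.
  - apply Hh_du; auto.
  - apply dplus; [apply dscal|]; apply Hh_du; auto.
  - apply dplus; [apply dplus|]; try apply dscal; apply Hh_du; auto.
  - apply dplus; [apply dplus; [apply dplus|]|]; try apply dscal; apply Hh_du; auto.
  - apply dconst.
Qed.

Lemma Ww_cd j k p q u v : (p <= 3)%nat -> in_dom alpha v -> cont_dom alpha (Ww j k p q) u v.
Proof.
  intros Hp Hv.
  assert (HC : forall c r, cont_dom alpha (fun x y => c * Hh j k p r x y) u v).
  { intros c r. apply (cd_mult alpha (fun _ _ => c)). apply cd_const. apply Hh_cd; auto. }
  destruct q as [|[|[|[|q]]]]; unfold Ww.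
  - apply Hh_cd; auto.
  - apply cd_plus; auto. apply Hh_cd; auto.
  - apply cd_plus; [apply cd_plus|]; auto. apply Hh_cd; auto.
  - apply cd_plus; [apply cd_plus; [apply cd_plus|]|]; auto. apply Hh_cd; auto.
  - apply cd_const.
Qed.

Lemma Ww_dv j k p q u v : (p <= 3)%nat -> (q < 3)%nat -> in_dom alpha v ->
  derivable_pt_lim (fun y => Ww j k p q u y) v (Ww j k p (S q) u v - Lj j * Ww j k p q u v).
Proof.
  intros Hp Hq Hv. destruct q as [|[|[|q]]]; try (exfalso; lia); unfold Ww.
  - eapply deq. apply Hh_dv; auto. ring.
  - eapply deq. apply dplus; [apply dscal|]; apply Hh_dv; auto. ring.
  - eapply deq. apply dplus; [apply dplus|]; try apply dscal; apply Hh_dv; auto. ring.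
Qed.

Lemma TT_good j k : good alpha (TT j k).
Proof.
  split; [|split].
  - intros p q u v Hpq Hv. unfold TT.
    eapply deq. apply dscal. apply Ww_du; auto. lia. ring.
  - intros p q u v Hpq Hv. unfold TT.
    eapply deq. apply dmult. apply dscal. apply dpow2. apply Ww_dv; auto; lia.
    unfold Lj. ring.
  - intros p q u v Hpq Hv. unfold TT.
    apply cd_mult. apply (cd_mult alpha (fun _ _ => eps (- Z.of_nat j)%Z k)). apply cd_const.
    apply cd_v. apply derivable_continuous_pt. exists (INR j * ln 2 * Rpower 2 (INR j * v)).
    apply dpow2. apply Ww_cd; auto. lia.
Qed.

Definition bb j n p q u v :=
  match n with
  | O => TT j 0%Z p q u v
  | S m => TT j (Z.of_nat (S m)) p q u v + TT j (- Z.of_nat (S m))%Z p q u v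
  end.

Lemma bb_good j n : good alpha (bb j n).
Proof.
  destruct n as [|m]; unfold bb.
  - apply TT_good.
  - destruct (TT_good j (Z.of_nat (S m))) as [A1 [A2 A3]].
    destruct (TT_good j (- Z.of_nat (S m))%Z) as [B1 [B2 B3]].
    split; [|split]; intros p q u v Hpq Hv.
    + apply dplus; auto.
    + apply dplus; auto.
    + apply cd_plus; auto.
Qed.
End Terms.

Lemma fin_max (P : nat -> R -> Prop) N :
  (forall n K K', P n K -> K <= K' -> P n K') ->
  (forall n, (n <= N)%nat -> exists K, P n K) ->
  exists K, 0 <= K /\ forall n, (n <= N)%nat -> P n K.
Proof.
  intros Hm H. induction N.
  - destruct (H 0%nat (le_n _)) as [K HK]. exists (Rmax K 0). split. apply Rmax_r.
    intros n Hn. assert (n = 0%nat) by lia. subst. eapply Hm; eauto. apply Rmax_l.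
  - destruct IHN as [K1 [HK1 H1]]. intros; apply H; lia.
    destruct (H (S N) (le_n _)) as [K2 HK2].
    exists (Rmax K1 K2). split. eapply Rle_trans; [exact HK1| apply Rmax_l].
    intros n Hn. destruct (Nat.eq_dec n (S N)) as [->|Hne].
    + eapply Hm; eauto. apply Rmax_r.
    + eapply Hm. apply H1. lia. apply Rmax_l.
Qed.

Lemma Ww_bound (L m h0 h1 h2 h3 : R) q : 0 <= L ->
  Rabs h0 <= m -> Rabs h1 <= m -> Rabs h2 <= m -> Rabs h3 <= m ->
  Rabs (match q with
  | O => h0
  | 1%nat => L * h0 + h1
  | 2%nat => L ^ 2 * h0 + 2 * L * h1 + h2
  | 3%nat => L ^ 3 * h0 + 3 * L ^ 2 * h1 + 3 * L * h2 + h3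
  | _ => 0
  end) <= (1 + L) ^ 3 * m.
Proof.
  intros HL H0 H1 H2 H3.
  assert (Hm : 0 <= m) by (eapply Rle_trans; [apply Rabs_pos| exact H0]).
  assert (T : forall c x, 0 <= c -> Rabs x <= m -> Rabs (c * x) <= c * m).
  { intros c x Hc Hx. rewrite Rabs_mult, Rabs_pos_eq by auto. apply Rmult_le_compat_l; auto. }
  assert (T2 : forall x y, Rabs (x + y) <= Rabs x + Rabs y) by apply Rabs_triang.
  assert (Q1 : m <= (1 + L) ^ 3 * m).
  { rewrite <- (Rmult_1_l m) at 1. apply Rmult_le_compat_r; auto. apply pow_R1_Rle. lra. }
  assert (Q2 : (1 + L) * m <= (1 + L) ^ 3 * m).
  { apply Rmult_le_compat_r; auto. replace ((1+L)^3) with ((1+L) * (1+L)^2) by ring.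
    rewrite <- (Rmult_1_r (1+L)) at 1. apply Rmult_le_compat_l; [lra|]. apply pow_R1_Rle. lra. }
  assert (Q3 : (1 + L)^2 * m <= (1 + L) ^ 3 * m).
  { apply Rmult_le_compat_r; auto. replace ((1+L)^3) with ((1+L)^2 * (1+L)) by ring.
    rewrite <- (Rmult_1_r ((1+L)^2)) at 1. apply Rmult_le_compat_l; [apply pow_le; lra|]. lra. }
  destruct q as [|[|[|[|q]]]].
  - lra.
  - pose proof (T L h0 HL H0). pose proof (T2 (L*h0) h1). nra.
  - pose proof (T (L^2) h0 ltac:(nra) H0). pose proof (T (2*L) h1 ltac:(nra) H1).
    pose proof (T2 (L^2*h0 + 2*L*h1) h2). pose proof (T2 (L^2*h0) (2*L*h1)).
    assert (0 <= L * m) by nra. assert (0 <= L^2*m) by nra. assert (0 <= L^3 * m) by nra. nra.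
  - pose proof (T (L^3) h0 ltac:(nra) H0). pose proof (T (3*L^2) h1 ltac:(nra) H1).
    pose proof (T (3*L) h2 ltac:(nra) H2).
    pose proof (T2 (L ^ 3 * h0 + 3 * L ^ 2 * h1 + 3 * L * h2) h3).
    pose proof (T2 (L ^ 3 * h0 + 3 * L ^ 2 * h1) (3 * L * h2)).
    pose proof (T2 (L ^ 3 * h0) (3 * L ^ 2 * h1)). nra.
  - rewrite Rabs_R0. apply Rmult_le_pos; auto. apply pow_le; lra.
Qed.

Lemma decay_shift (K M d y kk : R) : 0 < M -> 0 <= K -> Rabs (y + kk) <= M ->
  (3 + Rabs y) ^ 2 * Rabs d <= K -> Rabs d <= K * (1 + M) ^ 2 / (3 + Rabs kk) ^ 2.
Proof.
  intros HM HK Hy Hd.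
  assert (E : 3 + Rabs kk <= (1 + M) * (3 + Rabs y)).
  { replace kk with ((y + kk) - y) by ring. pose proof (Rabs_triang (y + kk) (- y)).
    rewrite Rabs_Ropp in H. unfold Rminus. pose proof (Rabs_pos y). nra. }
  pose proof (Rabs_pos kk). pose proof (Rabs_pos y). pose proof (Rabs_pos d).
  assert (P : 0 < (3 + Rabs kk) ^ 2) by (apply pow_lt; lra).
  apply (Rmult_le_reg_r ((3 + Rabs kk) ^ 2)); auto.
  unfold Rdiv. rewrite Rmult_assoc, Rinv_l by lra. rewrite Rmult_1_r.
  assert (E2 : (3 + Rabs kk) ^ 2 <= (1 + M) ^ 2 * (3 + Rabs y) ^ 2).
  { rewrite <- Rpow_mult_distr. apply pow_incr. lra. }
  assert (Rabs d * (3 + Rabs kk) ^ 2 <= Rabs d * ((1 + M) ^ 2 * (3 + Rabs y) ^ 2)).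
  { apply Rmult_le_compat_l; auto. }
  assert (0 <= (1+M)^2) by (apply pow_le; lra).
  nra.
Qed.

Lemma inv2pow_le j : 0 < / 2 ^ j <= 1.
Proof.
  split. apply Rinv_0_lt_compat, pow_lt; lra.
  rewrite <- Rinv_1. apply Rinv_le_contravar. lra. apply pow_R1_Rle. lra.
Qed.

Section Bounds.
Variable alpha : R.
Variable DP : nat -> nat -> R -> R -> R.
Hypothesis HD2 : forall p q x v, (p < 3)%nat -> in_dom alpha v ->
          derivable_pt_lim (fun y => DP p q y v) x (DP (S p) q x v).
Variables (M a b K : R).
Hypothesis HM : 0 < M.
Hypothesis HK0 : 0 <= K.
Hypothesis Hab : 1 / alpha < a /\ b < 1.
Hypothesis HK : forall p r x v, (p <= 3)%nat -> (r <= 3)%nat -> a <= v <= b ->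
  (3 + Rabs x) ^ 2 * Rabs (DP p r x v) <= K.

Lemma Hh_bound j k p r u v : (p <= 3)%nat -> (r <= 3)%nat -> Rabs u <= M -> a <= v <= b ->
  Rabs (Hh DP j k p r u v) <= / 2 ^ j * (K * (1 + M) ^ 3) / (3 + Rabs (IZR k)) ^ 2.
Proof.
  intros Hp Hr Hu Hv.
  destruct (inv2pow_le j) as [I1 I2].
  assert (Hx : Rabs (/ 2 ^ j * u - IZR k + IZR k) <= / 2 ^ j * M).
  { replace (/ 2 ^ j * u - IZR k + IZR k) with (/ 2 ^ j * u) by ring.
    rewrite Rabs_mult, Rabs_pos_eq by lra. apply Rmult_le_compat_l; lra. }
  assert (HxM : / 2 ^ j * M <= M) by nra.
  assert (Pk : 0 < (3 + Rabs (IZR k)) ^ 2) by (apply pow_lt; pose proof (Rabs_pos (IZR k)); lra).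
  assert (Hdom : in_dom alpha v) by (unfold in_dom; lra).
  destruct p as [|p]; simpl.
  - destruct (MVT_abs (fun y => DP 0%nat r y v) (fun y => DP 1%nat r y v) (- IZR k) (/ 2 ^ j * u - IZR k))
      as [c [Hc1 Hc2]].
    { intros c _. apply HD2; auto. }
    rewrite Hc1.
    assert (Hck : Rabs (c + IZR k) <= / 2 ^ j * M).
    { unfold Rmin, Rmax in Hc2. destruct (Rle_dec (- IZR k) (/ 2 ^ j * u - IZR k));
      apply Rabs_le_between; apply Rabs_le_between in Hx; lra. }
    pose proof (decay_shift K M (DP 1%nat r c v) c (IZR k) HM HK0 ltac:(lra) (HK 1%nat r c v ltac:(lia) Hr Hv)).
    replace (/ 2 ^ j * u - IZR k - - IZR k) with (/ 2 ^ j * u - IZR k + IZR k) by ring.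
    apply Rle_trans with (K * (1 + M) ^ 2 / (3 + Rabs (IZR k)) ^ 2 * (/ 2 ^ j * M)).
    + apply Rmult_le_compat; auto using Rabs_pos.
    + unfold Rdiv. 
      assert (0 <= / (3 + Rabs (IZR k)) ^ 2) by (left; apply Rinv_0_lt_compat; auto).
      assert (0 <= (1+M)^2) by (apply pow_le; lra).
      assert (0 <= K * (1+M)^2 * / (3 + Rabs (IZR k)) ^ 2) by (apply Rmult_le_pos; [apply Rmult_le_pos|]; auto).
      set (X := K * (1 + M) ^ 2 * / (3 + Rabs (IZR k)) ^ 2) in *.
      apply Rle_trans with (X * / 2 ^ j * (1 + M)).
      { rewrite <- Rmult_assoc. apply Rmult_le_compat_l; [apply Rmult_le_pos; lra| lra]. }
      right. unfold X. simpl. ring.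
  - pose proof (decay_shift K M (DP (S p) r (/ 2 ^ j * u - IZR k) v) (/ 2 ^ j * u - IZR k) (IZR k)
        HM HK0 ltac:(lra) (HK (S p) r _ v Hp Hr Hv)).
    rewrite Rabs_mult.
    assert (Hq : Rabs (/ 2 ^ j * (/ 2 ^ j) ^ p) <= / 2 ^ j).
    { assert (0 <= (/ 2 ^ j) ^ p) by (apply pow_le; lra).
      assert ((/ 2 ^ j) ^ p <= 1) by (rewrite <- (pow1 p); apply pow_incr; lra).
      rewrite Rabs_pos_eq by nra. nra. }
    assert (0 <= / (3 + Rabs (IZR k)) ^ 2) by (left; apply Rinv_0_lt_compat; auto).
    assert (1 <= 1 + M) by lra.
    assert (0 <= (1+M)^2) by (apply pow_le; lra).
    assert (0 <= K * (1+M)^2 * / (3 + Rabs (IZR k)) ^ 2) by (apply Rmult_le_pos; [apply Rmult_le_pos|]; auto).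
    unfold Rdiv in *. replace ((1 + M) ^ 3) with ((1+M)^2 * (1 + M)) by ring.
    pose proof (Rabs_pos (DP (S p) r (/ 2 ^ j * u - IZR k) v)).
    pose proof (Rabs_pos (/ 2 ^ j * (/ 2 ^ j) ^ p)).
    apply Rle_trans with (/ 2 ^ j * (K * (1 + M) ^ 2 * / (3 + Rabs (IZR k)) ^ 2)).
    + apply Rmult_le_compat; auto.
    + set (Y := K * (1 + M) ^ 2 * / (3 + Rabs (IZR k)) ^ 2) in *.
      apply Rle_trans with (/ 2 ^ j * Y * (1 + M)).
      { rewrite <- (Rmult_1_r (/ 2 ^ j * Y)) at 1. apply Rmult_le_compat_l; [apply Rmult_le_pos; lra| lra]. }
      right. unfold Y. simpl. ring.
Qed.
End Bounds.

Lemma rpow_m2 y beta : 0 < y -> Rpower y (beta - 2) = Rpower y beta * / y ^ 2.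
Proof.
  intros Hy. unfold Rminus. rewrite Rpower_plus, Rpower_Ropp.
  replace 2 with (INR 2) at 1 by (simpl; ring). rewrite Rpower_pow by auto. reflexivity.
Qed.

Lemma rpow_pos x y : 0 < Rpower x y.
Proof. unfold Rpower; apply exp_pos. Qed.

Section TB.
Variable alpha : R.
Variable DP : nat -> nat -> R -> R -> R.
Variable eps : Z -> Z -> R.
Hypothesis HD2 : forall p q x v, (p < 3)%nat -> in_dom alpha v ->
          derivable_pt_lim (fun y => DP p q y v) x (DP (S p) q x v).
Variables (M a b K C beta : R).
Hypothesis HM : 0 < M.
Hypothesis HK0 : 0 <= K.
Hypothesis Hab : 1 / alpha < a /\ b < 1.
Hypothesis HK : forall p r x v, (p <= 3)%nat -> (r <= 3)%nat -> a <= v <= b ->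
  (3 + Rabs x) ^ 2 * Rabs (DP p r x v) <= K.
Hypothesis HC : 0 < C.
Hypothesis Heps : forall j k : Z, Rabs (eps j k) <=
        C * Rpower (3 + Rabs (IZR j)) beta * Rpower (3 + Rabs (IZR k)) beta.

Lemma TT_bound j k p q u v : (p <= 3)%nat -> Rabs u <= M -> a <= v <= b ->
  Rabs (TT DP eps j k p q u v) <=
  C * Rpower (3 + INR j) beta * Rpower 2 (INR j * b) * (1 + Lj j) ^ 3 * (/ 2 ^ j * (K * (1 + M) ^ 3))
   * Rpower (3 + Rabs (IZR k)) (beta - 2).
Proof.
  intros Hp Hu Hv. unfold TT.
  assert (HL : 0 <= Lj j).
  { unfold Lj. apply Rmult_le_pos. apply pos_INR. rewrite <- ln_1. left; apply ln_increasing; lra. }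
  assert (Y : 0 < 3 + Rabs (IZR k)) by (pose proof (Rabs_pos (IZR k)); lra).
  set (m := / 2 ^ j * (K * (1 + M) ^ 3) / (3 + Rabs (IZR k)) ^ 2).
  assert (HW : Rabs (Ww DP j k p q u v) <= (1 + Lj j) ^ 3 * m).
  { unfold Ww. apply Ww_bound; auto; apply (Hh_bound alpha DP HD2 M a b K); auto; lia. }
  assert (HE : Rabs (eps (- Z.of_nat j)%Z k) <= C * Rpower (3 + INR j) beta * Rpower (3 + Rabs (IZR k)) beta).
  { eapply Rle_trans; [apply Heps|]. rewrite opp_IZR, <- INR_IZR_INZ, Rabs_Ropp, Rabs_pos_eq by apply pos_INR.
    right; reflexivity. }
  assert (HA : Rpower 2 (INR j * v) <= Rpower 2 (INR j * b)).
  { apply Rle_Rpower. lra. apply Rmult_le_compat_l. apply pos_INR. lra. }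
  rewrite !Rabs_mult. rewrite (Rabs_pos_eq (Rpower 2 _)) by (left; apply rpow_pos).
  assert (0 <= m).
  { unfold m, Rdiv. apply Rmult_le_pos. apply Rmult_le_pos. left; apply Rinv_0_lt_compat, pow_lt; lra.
    apply Rmult_le_pos; auto. apply pow_le; lra. left; apply Rinv_0_lt_compat, pow_lt; lra. }
  apply Rle_trans with ((C * Rpower (3 + INR j) beta * Rpower (3 + Rabs (IZR k)) beta) *
     Rpower 2 (INR j * b) * ((1 + Lj j) ^ 3 * m)).
  - apply Rmult_le_compat; try apply Rabs_pos.
    apply Rmult_le_pos; [apply Rabs_pos| left; apply rpow_pos].
    apply Rmult_le_compat; auto; try apply Rabs_pos. left; apply rpow_pos.
    auto.
  - right. rewrite rpow_m2 by auto. unfold m. unfold Rdiv. ring.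
Qed.
End TB.

Lemma lim_seq_eq u l : Un_cv u l -> lim_seq u = l.
Proof.
  intros H. unfold lim_seq. destruct excluded_middle_informative as [E|E].
  - destruct (constructive_indefinite_description _ E) as [l' Hl']. simpl.
    eapply UL_sequence; eauto.
  - exfalso; apply E; eauto.
Qed.

Definition pairF (F : Z -> R) (n : nat) : R :=
  match n with
  | O => F 0%Z
  | S m => F (Z.of_nat (S m)) + F (- Z.of_nat (S m))%Z
  end.

Lemma symsum F N : sum_f_R0 (fun i => F (Z.of_nat i - Z.of_nat N)%Z) (2 * N) = sum_f_R0 (pairF F) N.
Proof.
  induction N.
  - simpl. reflexivity.
  - replace (2 * S N)%nat with (S (S (2 * N))) by lia.
    rewrite tech5. rewrite decomp_sum by lia.
    replace (pred (S (2 * N))) with (2 * N)%nat by lia.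
    rewrite tech5. rewrite <- IHN.
    replace (sum_f_R0 (fun i => F (Z.of_nat (S i) - Z.of_nat (S N))%Z) (2 * N))
      with (sum_f_R0 (fun i => F (Z.of_nat i - Z.of_nat N)%Z) (2 * N)).
    2: { apply sum_eq. intros i _. f_equal. lia. }
    change (pairF F (S N)) with (F (Z.of_nat (S N)) + F (- Z.of_nat (S N))%Z).
    replace (Z.of_nat 0 - Z.of_nat (S N))%Z with (- Z.of_nat (S N))%Z by lia.
    replace (Z.of_nat (S (S (2 * N))) - Z.of_nat (S N))%Z with (Z.of_nat (S N)) by lia.
    ring.
Qed.

Lemma sumZ_eq F : ex_series (pairF F) -> sumZ F = Series (pairF F).
Proof.
  intros H. unfold sumZ. apply lim_seq_eq.
  apply (Un_cv_ext (fun N => sum_f_R0 (pairF F) N)).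
  - intros N. symmetry. apply symsum.
  - apply ser_cv; auto.
Qed.

Lemma sumN1_eq G : ex_series (fun i => G (S i)) -> sumN1 G = Series (fun i => G (S i)).
Proof.
  intros H. unfold sumN1. apply lim_seq_eq. apply ser_cv; auto.
Qed.

Lemma ln2_bounds : 0 < ln 2 < 1.
Proof.
  split. rewrite <- ln_1. apply ln_increasing; lra.
  rewrite <- (ln_exp 1). apply ln_increasing. lra.
  pose proof (exp_ineq1 1 ltac:(lra)). lra.
Qed.

Lemma rho_facts b : b < 1 -> 0 < Rpower 2 (b - 1) < 1.
Proof.
  intros Hb. split. apply rpow_pos. apply Rlt_le_trans with (Rpower 2 0). apply Rpower_lt; lra.
  rewrite Rpower_O; lra.
Qed.

Lemma pow_split n b : Rpower 2 (INR n * b) * / 2 ^ n = (Rpower 2 (b - 1)) ^ n.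
Proof.
  replace (INR n * b) with ((b - 1) * INR n + INR n) by ring.
  rewrite Rpower_plus, <- Rpower_mult, !Rpower_pow by (try apply rpow_pos; lra).
  field. apply pow_nonzero; lra.
Qed.

Lemma G_bound (C K1 beta b : R) j (T : R) (D : R) : 0 < C -> 0 <= K1 -> 0 <= beta <= 1 -> b < 1 -> 0 <= D ->
  T <= C * Rpower (3 + INR (S j)) beta * Rpower 2 (INR (S j) * b) * (1 + Lj (S j)) ^ 3 *
        (/ 2 ^ (S j) * K1) * D ->
  T <= (C * K1 * ((4 + INR j) ^ 4 * Rpower 2 (b - 1) ^ j)) * D.
Proof.
  intros HC HK Hbeta Hb HD HT. eapply Rle_trans; [exact HT|].
  pose proof (pos_INR j). rewrite S_INR in *.
  assert (P1 : Rpower (3 + (INR j + 1)) beta <= 4 + INR j).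
  { replace (4 + INR j) with (Rpower (3 + (INR j + 1)) 1) by (rewrite Rpower_1; lra).
    apply Rle_Rpower; lra. }
  assert (P0 : 0 <= Rpower (3 + (INR j + 1)) beta) by (left; apply rpow_pos).
  destruct ln2_bounds as [L1 L2].
  assert (P2 : (1 + Lj (S j)) ^ 3 <= (4 + INR j) ^ 3).
  { apply pow_incr. unfold Lj. rewrite S_INR. split; nra. }
  assert (P2' : 0 <= (1 + Lj (S j)) ^ 3).
  { apply pow_le. unfold Lj. rewrite S_INR. nra. }
  destruct (rho_facts b Hb) as [R1 R2].
  assert (P3 : Rpower 2 ((INR j + 1) * b) * / 2 ^ S j <= Rpower 2 (b - 1) ^ j).
  { rewrite <- S_INR, pow_split. simpl. rewrite <- (Rmult_1_l (Rpower 2 (b - 1) ^ j)) at 2.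
    apply Rmult_le_compat_r; [apply pow_le|]; lra. }
  assert (P3' : 0 <= Rpower 2 ((INR j + 1) * b) * / 2 ^ S j).
  { apply Rmult_le_pos. left; apply rpow_pos. left; apply Rinv_0_lt_compat, pow_lt; lra. }
  replace (C * Rpower (3 + (INR j + 1)) beta * Rpower 2 ((INR j + 1) * b) * (1 + Lj (S j)) ^ 3 *
     (/ 2 ^ S j * K1) * D) with
    ((C * K1 * D) * (Rpower (3 + (INR j + 1)) beta * (1 + Lj (S j)) ^ 3 * (Rpower 2 ((INR j + 1) * b) * / 2 ^ S j))) by ring.
  replace (C * K1 * ((4 + INR j) ^ 4 * Rpower 2 (b - 1) ^ j) * D) with
    ((C * K1 * D) * ((4 + INR j) * (4 + INR j) ^ 3 * Rpower 2 (b - 1) ^ j)) by ring.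
  apply Rmult_le_compat_l. apply Rmult_le_pos; [apply Rmult_le_pos|]; lra.
  apply Rmult_le_compat; auto. apply Rmult_le_pos; auto.
  apply Rmult_le_compat; auto.
Qed.

Lemma qdiv_le x y K : 0 <= K -> 0 <= y -> x <= K * y -> qdiv x y <= K.
Proof.
  intros HK Hy Hx. unfold qdiv. destruct Req_EM_T as [E|E]; auto.
  apply (Rmult_le_reg_r y). lra. unfold Rdiv. rewrite Rmult_assoc, Rinv_l by auto. lra.
Qed.

Lemma lip_lemma alpha (S : nat -> nat -> R -> R -> R) M a b B : good alpha S -> boxok alpha M a b ->
  domb S M a b B -> forall u1 u2 v1 v2, Rabs u1 <= M -> Rabs u2 <= M -> a <= v1 <= b -> a <= v2 <= b ->
  Rabs (S 0%nat 0%nat u1 v1 - S 0%nat 0%nat u2 v2) <= B * (Rabs (u1 - u2) + Rabs (v1 - v2)).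
Proof.
  intros [G1 [G2 G3]] [HM [Ha [Hab Hb]]] HB u1 u2 v1 v2 Hu1 Hu2 Hv1 Hv2.
  assert (D1 : in_dom alpha v1) by (unfold in_dom; lra).
  destruct (MVT_abs (fun x => S 0%nat 0%nat x v1) (fun x => S 1%nat 0%nat x v1) u2 u1) as [c [Hc1 Hc2]].
  { intros c _. apply G1; auto. }
  destruct (MVT_abs (fun y => S 0%nat 0%nat u2 y) (fun y => S 0%nat 1%nat u2 y) v2 v1) as [e [He1 He2]].
  { intros e He. apply G2; auto. unfold in_dom. unfold Rmin, Rmax in He.
    destruct (Rle_dec v2 v1); lra. }
  assert (Bc : Rabs (S 1%nat 0%nat c v1) <= B).
  { apply HB; auto. apply Rabs_le_between. apply Rabs_le_between in Hu1. apply Rabs_le_between in Hu2.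
    unfold Rmin, Rmax in Hc2. destruct (Rle_dec u2 u1); lra. }
  assert (Be : Rabs (S 0%nat 1%nat u2 e) <= B).
  { apply HB; auto. unfold Rmin, Rmax in He2. destruct (Rle_dec v2 v1); lra. }
  replace (S 0%nat 0%nat u1 v1 - S 0%nat 0%nat u2 v2) with
    ((S 0%nat 0%nat u1 v1 - S 0%nat 0%nat u2 v1) + (S 0%nat 0%nat u2 v1 - S 0%nat 0%nat u2 v2)) by ring.
  eapply Rle_trans; [apply Rabs_triang|]. rewrite Hc1, He1.
  pose proof (Rabs_pos (u1 - u2)). pose proof (Rabs_pos (v1 - v2)).
  pose proof (Rabs_pos (S 1%nat 0%nat c v1)). pose proof (Rabs_pos (S 0%nat 1%nat u2 e)).
  nra.
Qed.

Theorem mainTheorem5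
  (alpha : R) (Halpha : 1 < alpha < 2)
  (psi : R -> R)
  (* psi : three times continuously differentiable, compactly supported *)
  (Hpsi_C3 : exists d1 d2 d3 : R -> R,
      (forall s, derivable_pt_lim psi s (d1 s)) /\
      (forall s, derivable_pt_lim d1 s (d2 s)) /\
      (forall s, derivable_pt_lim d2 s (d3 s)) /\
      continuity d3)
  (Hpsi_supp : exists L, 0 < L /\ forall s, L < Rabs s -> psi s = 0)
  (* the stated (usable) facts on Psi: partial derivatives d_x^p d_v^q Psi,
     p in {0,1,2,3}, q in N, exist, are continuous, and decay like (3+|x|)^-2
     uniformly for v in compact subintervals of (1/alpha;1) *)
  (HPsi : exists DPsi : nat -> nat -> R -> R -> R,
      (forall x v, in_dom alpha v -> DPsi 0%nat 0%nat x v = Psi alpha psi x v) /\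
      (forall p q x v, (p < 3)%nat -> in_dom alpha v ->
          derivable_pt_lim (fun y => DPsi p q y v) x (DPsi (S p) q x v)) /\
      (forall p q x v, (p <= 3)%nat -> in_dom alpha v ->
          derivable_pt_lim (fun w => DPsi p q x w) v (DPsi p (S q) x v)) /\
      (forall p q x v, (p <= 3)%nat -> in_dom alpha v -> cont_dom alpha (DPsi p q) x v) /\
      (forall p q a b, (p <= 3)%nat -> 1 / alpha < a -> a <= b -> b < 1 ->
          exists K, forall x v, a <= v <= b ->
            (3 + Rabs x) ^ 2 * Rabs (DPsi p q x v) <= K))
  (* the coefficients eps_{j,k}(omega) for a fixed omega in Omega_0^* *)
  (eps : Z -> Z -> R)
  (Heps : forall eta, 0 < eta -> exists C, 0 < C /\ forall j k : Z,
      Rabs (eps j k) <=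
        C * Rpower (3 + Rabs (IZR j)) (1 / alpha + eta)
          * Rpower (3 + Rabs (IZR k)) (1 / alpha + eta)) :
  C3_dom alpha (Xdot alpha psi eps) /\
  (forall M a b, 0 < M -> 1 / alpha < a -> a < b -> b < 1 ->
     exists K, forall u1 u2 v1 v2,
       -M <= u1 <= M -> -M <= u2 <= M -> a <= v1 <= b -> a <= v2 <= b ->
       qdiv (Rabs (Xdot alpha psi eps u1 v1 - Xdot alpha psi eps u2 v2))
            (Rabs (u1 - u2) + Rabs (v1 - v2)) <= K) /\
  (forall M a b, 0 < M -> 1 / alpha < a -> a < b -> b < 1 ->
     exists K, forall u1 u2 v,
       -M <= u1 <= M -> -M <= u2 <= M -> a <= v <= b ->
       qdiv (Rabs (Xdot alpha psi eps u1 v - Xdot alpha psi eps u2 v))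
            (Rabs (u1 - u2)) <= K).
Proof.
  destruct HPsi as [DP [HP1 [HP2 [HP3 [HP4 HP5]]]]].
  assert (Hia : 1/2 < 1/alpha < 1).
  { assert (/ alpha < 1) by (rewrite <- Rinv_1; apply Rinv_lt_contravar; lra).
    assert (/ 2 < / alpha) by (apply Rinv_lt_contravar; lra). unfold Rdiv. lra. }
  set (beta := (1 + 1/alpha)/2).
  destruct (Heps ((1 - 1/alpha)/2)) as [C [HC HCb]]; [lra|].
  assert (HE : forall j k : Z, Rabs (eps j k) <=
        C * Rpower (3 + Rabs (IZR j)) beta * Rpower (3 + Rabs (IZR k)) beta).
  { intros j k. replace beta with (1 / alpha + (1 - 1 / alpha) / 2) by (unfold beta; field; lra).
    apply HCb. }
  set (t := fun j n => bb DP eps (S j) n).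
  assert (Hgood : forall j n, good alpha (t j n)).
  { intros j n. apply (bb_good alpha DP eps HP2 HP3 HP4). }
  assert (Hbox : forall M a b, boxok alpha M a b -> exists c d : nat -> R,
    (forall j, 0 <= c j) /\ (forall n, 0 <= d n) /\ ex_series c /\ ex_series d /\
    forall j n, domb (t j n) M a b (c j * d n)).
  { intros M a b [HM [Ha [Hab Hb]]].
    destruct (fin_max (fun p K => forall r x v, (r <= 3)%nat -> a <= v <= b ->
                 (3 + Rabs x) ^ 2 * Rabs (DP p r x v) <= K) 3) as [K [HK0 HK]].
    { intros n K K' H1 H2 r x v Hr Hv. eapply Rle_trans; [apply H1|]; auto. }
    { intros p Hp.
      destruct (fin_max (fun r K => forall x v, a <= v <= b ->
                 (3 + Rabs x) ^ 2 * Rabs (DP p r x v) <= K) 3) as [K' [_ HK']].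
      { intros n K K' H1 H2 x v Hv. eapply Rle_trans; [apply H1|]; auto. }
      { intros r Hr. apply HP5; auto. }
      exists K'. intros r x v Hr Hv. apply HK'; auto. }
    assert (HK' : forall p r x v, (p <= 3)%nat -> (r <= 3)%nat -> a <= v <= b ->
       (3 + Rabs x) ^ 2 * Rabs (DP p r x v) <= K).
    { intros p r x v Hp Hr Hv. apply HK; auto. }
    set (K1 := K * (1 + M) ^ 3).
    assert (HK1 : 0 <= K1) by (unfold K1; apply Rmult_le_pos; auto; apply pow_le; lra).
    set (rho := Rpower 2 (b - 1)).
    destruct (rho_facts b Hb) as [R1 R2]. fold rho in R1, R2.
    exists (fun j => 2 * (C * K1 * ((4 + INR j) ^ 4 * rho ^ j))), (fun n => Rpower (3 + INR n) (beta - 2)).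
    assert (Hbeta : 0 <= beta <= 1) by (unfold beta; lra).
    assert (TB : forall j k p q u v, (p <= 3)%nat -> Rabs u <= M -> a <= v <= b ->
       Rabs (TT DP eps (S j) k p q u v) <= (C * K1 * ((4 + INR j) ^ 4 * rho ^ j)) * Rpower (3 + Rabs (IZR k)) (beta - 2)).
    { intros j k p q u v Hp Hu Hv. apply (G_bound C K1 beta b); auto. left; apply rpow_pos.
      apply (TT_bound alpha DP eps HP2 M a b K C beta); auto. }
    assert (Hc0 : forall j, 0 <= C * K1 * ((4 + INR j) ^ 4 * rho ^ j)).
    { intros j. pose proof (pos_INR j). apply Rmult_le_pos. apply Rmult_le_pos; lra.
      apply Rmult_le_pos; apply pow_le; lra. }
    split; [intros j; specialize (Hc0 j); lra|].
    split; [intros n; left; apply rpow_pos|].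
    split.
    { apply (ex_series_ext (fun j => scal (2 * (C * K1)) ((4 + INR j) ^ 4 * rho ^ j))).
      intros j. unfold scal; simpl. unfold mult; simpl. ring.
      apply (ex_series_scal_l (2 * (C * K1)) (fun j => (4 + INR j) ^ 4 * rho ^ j)). apply poly_geom; auto. }
    split.
    { apply (ex_series_ext (fun n => Rpower (3 + INR n) (- (2 - beta)))).
      intros n. f_equal. ring. apply pseries. unfold beta; lra. }
    intros j n p q u v Hpq Hu Hv. unfold t, bb. assert (Hp : (p <= 3)%nat) by lia.
    pose proof (Hc0 j).
    destruct n as [|m].
    - eapply Rle_trans. apply TB; auto. rewrite Rabs_R0.
      replace (3 + 0) with (3 + INR 0) by (simpl; ring).
      assert (0 <= Rpower (3 + INR 0) (beta - 2)) by (left; apply rpow_pos). nra.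
    - eapply Rle_trans; [apply Rabs_triang|].
      pose proof (TB j (Z.of_nat (S m)) p q u v Hp Hu Hv).
      pose proof (TB j (- Z.of_nat (S m))%Z p q u v Hp Hu Hv).
      rewrite opp_IZR, Rabs_Ropp in H1. rewrite <- INR_IZR_INZ in H0, H1.
      rewrite (Rabs_pos_eq (INR (S m))) in H0, H1 by apply pos_INR.
      lra. }
  destruct (double_good alpha t Hgood Hbox) as [[G1 [G2 G3]] GB].
  assert (HX : forall u v, in_dom alpha v -> Xdot alpha psi eps u v = S2 t 0 0 u v).
  { intros u v Hv. destruct (nbhd alpha u v Hv) as [M [a [b [d [Hb0 [Hd Hn]]]]]].
    destruct (Hn u v) as [Hu' [Hv' _]]; try (rewrite Rminus_eq_0, Rabs_R0; lra).
    destruct (Hbox M a b Hb0) as [c [dd [Hc [Hdd [Ec [Ed Hcd]]]]]].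
    set (F := fun (j : nat) (k : Z) => Rpower 2 (INR j * v) * eps (- Z.of_nat j)%Z k *
      (Psi alpha psi (/ 2 ^ j * u - IZR k) v - Psi alpha psi (- IZR k) v)).
    assert (EF : forall j k, F j k = TT DP eps j k 0 0 u v).
    { intros j k. unfold F, TT, Ww, Hh. rewrite !HP1 by auto. ring. }
    assert (EP : forall j n, pairF (F (S j)) n = t j n 0%nat 0%nat u v).
    { intros j n. unfold t, bb, pairF. destruct n; rewrite ?EF; reflexivity. }
    assert (Inner : forall j, sumZ (F (S j)) = Sf (t j) 0 0 u v).
    { intros j. rewrite sumZ_eq. unfold Sf. apply Series_ext. apply EP.
      apply (ex_series_ext (fun n => t j n 0%nat 0%nat u v)). intros; symmetry; apply EP.
      apply (exs_dom _ (fun n => c j * dd n)). intros n; apply Hcd; auto.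
      apply (ex_series_scal_l (c j) dd); auto. }
    unfold Xdot. change (sumN1 (fun j => sumZ (F j)) = S2 t 0 0 u v). rewrite sumN1_eq.
    - unfold S2. apply Series_ext. intros j. rewrite Inner. reflexivity.
    - apply (ex_series_ext (fun j => Sf (t j) 0 0 u v)). intros; symmetry; apply Inner.
      apply (exs_dom _ (fun j => c j * Series dd)).
      + intros j. unfold Sf. rewrite <- Series_scal_l. apply ser_bound.
        intros n; apply Hcd; auto. apply (ex_series_scal_l (c j) dd); auto.
      + apply (ex_series_scal_r (Series dd) c); auto. }
  split; [|split].
  - exists (S2 t). split; [|split; [|split]].
    + intros u v Hv. symmetry. apply HX; auto.
    + exact G1.
    + exact G2.
    + exact G3.
  - intros M a b HM Ha Hab Hb.
    assert (Hbx : boxok alpha M a b) by (unfold boxok; repeat split; lra).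
    destruct (GB M a b Hbx) as [B [HB0 HB]].
    exists B. intros u1 u2 v1 v2 Hu1 Hu2 Hv1 Hv2.
    apply qdiv_le; auto. pose proof (Rabs_pos (u1 - u2)); pose proof (Rabs_pos (v1 - v2)); lra.
    rewrite !HX by (unfold in_dom; lra).
    apply (lip_lemma alpha (S2 t) M a b B (conj G1 (conj G2 G3))); auto.
    apply Rabs_le; lra. apply Rabs_le; lra.
  - intros M a b HM Ha Hab Hb.
    assert (Hbx : boxok alpha M a b) by (unfold boxok; repeat split; lra).
    destruct (GB M a b Hbx) as [B [HB0 HB]].
    exists B. intros u1 u2 v Hu1 Hu2 Hv.
    apply qdiv_le; auto. apply Rabs_pos.
    rewrite !HX by (unfold in_dom; lra).
    eapply Rle_trans. apply (lip_lemma alpha (S2 t) M a b B (conj G1 (conj G2 G3))); auto.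
    apply Rabs_le; lra. apply Rabs_le; lra.
    rewrite Rminus_eq_0, Rabs_R0, Rplus_0_r. lra.
Qed.
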